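(* For all positive integers $m$ and $n$ and every sequence $(a_i\colon i\in\mathbb{N})$ of positive integers, there is a bound $N$ (depending only on $m$, $n$ and the sequence) such that every strictly increasing chain $S_0\subsetneq S_1\subsetneq S_2\subsetneq\cdots$ of antichains $S_k$ of $(\mathbb{N}^m\times n,\le)$ satisfying $S_k\subseteq\{(\xi,h)\colon|\xi|\le a_k\}$ for each $k$ has length at most $N$.
   Context: $n$ denotes $\{0,\dots,n-1\}$; $\le$ is the product (componentwise) order on $\mathbb{N}^m\times n$; for $\xi\in\mathbb{N}^m$, $|\xi|=\sum_{i<m}\xi(i)$. An antichain is a set of pairwise $\le$-incomparable elements. *)

(* Defs.v *)
From mathcomp Require Import all_boot.
Set Implicit Arguments. Unset Strict Implicit. Unset Printing Implicit Defensive.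

Definition elem (m n : nat) : Type := ({ffun 'I_m -> nat} * 'I_n)%type.

Definition ple (m n : nat) (x y : elem m n) : Prop :=
  (forall i : 'I_m, x.1 i <= y.1 i) /\ (nat_of_ord x.2 <= nat_of_ord y.2).

Definition wt (m : nat) (xi : {ffun 'I_m -> nat}) : nat := \sum_(i < m) xi i.

Definition esubset (m n : nat) := elem m n -> Prop.

Definition antichain (m n : nat) (S : esubset m n) : Prop :=
  forall x y, S x -> S y -> x <> y -> ~ ple x y.

Definition strict_subset (m n : nat) (A B : esubset m n) : Prop :=
  (forall x, A x -> B x) /\ (exists x, B x /\ ~ A x).

(* Main.v *)
Require Import Defs.
From Stdlib Require Import Classical IndefiniteDescription.
From mathcomp Require Import all_boot.
Set Implicit Arguments. Unset Strict Implicit.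

Lemma tail_min (f : nat -> nat) i :
  exists j, i <= j /\ forall k, i <= k -> f j <= f k.
Proof.
apply: NNPP => H.
have A : forall v k, i <= k -> v <= f k.
  elim=> [//|v IH] k ik. rewrite ltnNge; apply/negP => fkv.
  have e: f k = v by apply/eqP; rewrite eqn_leq fkv IH.
  apply: H; exists k; split=>// k' ik'; rewrite e; exact: IH.
by have := A (f i).+1 i (leqnn i); rewrite ltnn.
Qed.

Definition incr (p : nat -> nat) := forall i, p i < p i.+1.
Definition ndec (f : nat -> nat) := forall i, f i <= f i.+1.

Lemma incr_le p : incr p -> forall i j, i <= j -> p i <= p j.
Proof.
move=> H i; elim=> [|j IH]; first by rewrite leqn0 => /eqP ->.
rewrite leq_eqVlt => /orP [/eqP -> //|lt].
exact: leq_trans (IH lt) (ltnW (H j)).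
Qed.

Lemma incr_lt p : incr p -> forall i j, i < j -> p i < p j.
Proof. move=> H i j lt; apply: leq_trans (H i) _; exact: incr_le H _ _ lt. Qed.

Lemma ndec_le f : ndec f -> forall i j, i <= j -> f i <= f j.
Proof.
move=> H i; elim=> [|j IH]; first by rewrite leqn0 => /eqP ->.
rewrite leq_eqVlt => /orP [/eqP -> //|lt].
exact: leq_trans (IH lt) (H j).
Qed.

Fixpoint iterphi (g : nat -> nat) k :=
  match k with 0 => g 0 | k'.+1 => g (iterphi g k').+1 end.

Lemma mono_sub (f : nat -> nat) :
  exists p, incr p /\ ndec (fun k => f (p k)).
Proof.
pose g i := proj1_sig (constructive_indefinite_description _ (tail_min f i)).
have Hg : forall i, i <= g i /\ forall k, i <= k -> f (g i) <= f k.
  move=> i; exact: proj2_sig (constructive_indefinite_description _ (tail_min f i)).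
exists (iterphi g); split.
  move=> i; exact: (Hg (iterphi g i).+1).1.
move=> k.
have lt : iterphi g k < iterphi g k.+1 by exact: (Hg (iterphi g k).+1).1.
case: k lt => [|k] lt.
  exact: (Hg 0).2.
apply: (Hg (iterphi g k).+1).2. apply: leq_trans (ltnW lt).
exact: (Hg (iterphi g k).+1).1.
Qed.

Lemma multi_sub (F : nat -> nat -> nat) r :
  exists p, incr p /\ forall t, t < r -> ndec (fun k => F t (p k)).
Proof.
elim: r => [|r [p [Hp HF]]].
  by exists id; split=> // i.
have [q [Hq Hf]] := mono_sub (fun k => F r (p k)).
exists (fun k => p (q k)); split.
  move=> i; exact: incr_lt Hp _ _ (Hq i).
move=> t; rewrite ltnS leq_eqVlt => /orP [/eqP ->|lt] k.
  exact: Hf.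
exact: (ndec_le (HF t lt) (ltnW (Hq k))).
Qed.

Lemma dickson (m n : nat) (X : nat -> elem m n) :
  exists i j, i < j /\ ple (X i) (X j).
Proof.
pose F t k := if t == m then nat_of_ord (X k).2
  else (if insub t is Some i then (X k).1 i else 0).
have [p [Hp HF]] := multi_sub F m.+1.
exists (p 0), (p 1); split; first exact: Hp.
split.
  move=> i. have := HF i (leq_trans (ltn_ord i) (leqnSn m)) 0.
  rewrite /F (ltn_eqF (ltn_ord i)).
  case: insubP => [j _ /val_inj -> //|]. by rewrite ltn_ord.
have := HF m (leqnn _) 0. by rewrite /F eqxx.
Qed.

Lemma fin_bound (T : finType) (Q : T -> nat -> Prop) :
  (forall t, exists N, Q t N) -> (forall t N N', N <= N' -> Q t N -> Q t N') ->
  exists N, forall t, Q t N.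
Proof.
move=> H Hm.
pose f t := proj1_sig (constructive_indefinite_description _ (H t)).
exists (\max_t f t) => t.
apply: (Hm t (f t)); first exact: leq_bigmax.
exact: proj2_sig (constructive_indefinite_description _ (H t)).
Qed.

Definition upd (T : Type) (y : nat -> T) k (z : T) : nat -> T :=
  fun j => if j == k then z else y j.

Fixpoint Ypath (T : Type) (e : T) (F : nat -> (nat -> T) -> T) k : nat -> T :=
  match k with 0 => fun _ => e | k'.+1 => upd (Ypath e F k') k' (F k' (Ypath e F k')) end.

Lemma Ypath_stable (T : Type) (e : T) F j k : j < k -> Ypath e F k j = Ypath e F j.+1 j.
Proof.
elim: k => [//|k IH]. rewrite ltnS leq_eqVlt => /orP [/eqP ->//|lt].
by rewrite /= /upd (ltn_eqF lt) IH.
Qed.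

Section Main.
Variables (m n : nat) (b : nat -> nat).

Definition Good (L : nat) (x : nat -> elem m n) :=
  (forall j k, j < L -> k < L -> j <> k -> ~ ple (x j) (x k)) /\
  (forall k, k < L -> wt (x k).1 <= b k).

Lemma Good_mono L L' x : L' <= L -> Good L x -> Good L' x.
Proof.
move=> le [H1 H2]; split.
  move=> j k jl kl; apply: H1; exact: leq_trans le.
move=> k kl; apply: H2; exact: leq_trans le.
Qed.

Definition ext k (y : nat -> elem m n) :=
  forall N, exists x, Good (k + N) x /\ forall j, j < k -> x j = y j.

Lemma coord_le (xi : {ffun 'I_m -> nat}) i : xi i <= wt xi.
Proof. by rewrite /wt (bigD1 i) //= leq_addr. Qed.

Lemma ext_step k y : ext k y -> exists z, ext k.+1 (upd y k z).
Proof.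
move=> He; apply: NNPP => Hn.
pose T := ({ffun 'I_m -> 'I_(b k).+1} * 'I_n)%type.
pose conv (t : T) : elem m n := ([ffun i => nat_of_ord (t.1 i)], t.2).
pose Q t N := ~ exists x, Good (k.+1 + N) x /\
   forall j, j < k.+1 -> x j = upd y k (conv t) j.
have [N0 HN0] : exists N, forall t, Q t N.
  apply: fin_bound.
    move=> t; apply: NNPP => H1; apply: Hn; exists (conv t) => N.
    by apply: NNPP => H2; apply: H1; exists N.
  move=> t N N' le HQ [x [Gx Ax]]; apply: HQ; exists x; split=>//.
  by apply: Good_mono Gx; rewrite leq_add2l.
have [x [Gx Ax]] := He N0.+1.
have wk : wt (x k).1 <= b k by apply: Gx.2; rewrite -addSnnS leq_addr.
pose t : T := ([ffun i => inord ((x k).1 i)], (x k).2).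
have ct : conv t = x k.
  rewrite /conv /t /=; case: (x k) wk => xi h /= wk; congr pair.
  apply/ffunP => i; rewrite !ffunE inordK //; rewrite ltnS.
  exact: leq_trans (coord_le xi i) wk.
apply: (HN0 t); exists x; split; first by rewrite addSnnS.
move=> j; rewrite ltnS /upd leq_eqVlt => /orP [/eqP ->|lt]; first by rewrite eqxx ct.
by rewrite (ltn_eqF lt) Ax.
Qed.

Lemma bounded : 0 < n -> exists N, forall L x, Good L x -> L <= N.
Proof.
move=> n0; apply: NNPP => H.
have H0 : ext 0 (fun _ => ([ffun _ => 0], Ordinal n0)).
  move=> N; apply: NNPP => H1; apply: H; exists N => L x Gx.
  rewrite leqNgt; apply/negP => lt; apply: H1; exists x; split=>//.
  exact: Good_mono (ltnW lt) Gx.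
pose e0 : elem m n := ([ffun _ => 0], Ordinal n0).
have HF : forall k y, exists z, ext k y -> ext k.+1 (upd y k z).
  move=> k y; case: (classic (ext k y)) => [/ext_step [z Hz]|Hn].
    by exists z.
  by exists e0.
pose F k y := proj1_sig (constructive_indefinite_description _ (HF k y)).
have HFs : forall k y, ext k y -> ext k.+1 (upd y k (F k y)).
  move=> k y; exact: proj2_sig (constructive_indefinite_description _ (HF k y)).
have Hy : forall k, ext k (Ypath e0 F k).
  elim=> [|k IH]; first exact: H0.
  exact: HFs.
pose X j := Ypath e0 F j.+1 j.
have [i [j [lt Hp]]] := dickson X.
have [x [[Gx _] Ax]] := Hy j.+1 0.
have lij : i < j.+1 by rewrite ltnS ltnW.
apply: (Gx i j).
- by rewrite addn0.
- by rewrite addn0.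
- by move=> E; rewrite E ltnn in lt.
rewrite (Ax i lij) (Ax j (ltnSn j)) (Ypath_stable _ _ lij). exact: Hp.
Qed.

End Main.

Theorem lemma4p9 (m n : nat) (a : nat -> nat) :
  0 < m -> 0 < n -> (forall i, 0 < a i) ->
  exists N : nat,
    forall (S : nat -> esubset m n) (L : nat),
      (forall k, k <= L -> antichain (S k)) ->
      (forall k, k <= L -> forall x, S k x -> wt x.1 <= a k) ->
      (forall k, k < L -> strict_subset (S k) (S k.+1)) ->
      L <= N.
Proof.
move=> _ n0 _.
have [N HN] := @bounded m n (fun k => a k.+1) n0.
exists N => S L Hanti Hwt Hss.
pose e0 : elem m n := ([ffun _ => 0], Ordinal n0).
have Hmono : forall j k, j <= k -> k <= L -> forall z, S j z -> S k z.
  move=> j; elim=> [|k IH]; first by rewrite leqn0 => /eqP ->.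
  rewrite leq_eqVlt => /orP [/eqP -> //|jk] kL z Sz.
  apply: (Hss k kL).1; apply: IH => //; exact: ltnW.
have HX : forall k, exists z, k < L -> S k.+1 z /\ ~ S k z.
  move=> k; case: (classic (k < L)) => [kL|nk]; last by exists e0.
  have [_ [z Hz]] := Hss k kL; by exists z.
pose x k := proj1_sig (constructive_indefinite_description _ (HX k)).
have Hx : forall k, k < L -> S k.+1 (x k) /\ ~ S k (x k).
  move=> k; exact: proj2_sig (constructive_indefinite_description _ (HX k)).
have neq : forall j k, j < k -> k < L -> x j <> x k.
  move=> j k jk kL E.
  apply: (Hx k kL).2; rewrite -E.
  apply: (Hmono j.+1) => //; first exact: ltnW.
  exact: (Hx j (ltn_trans jk kL)).1.
have inL : forall k, k < L -> S L (x k).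
  move=> k kL; apply: (Hmono k.+1) => //; exact: (Hx k kL).1.
apply: (HN L x); split.
  move=> j k jL kL jk.
  apply: (Hanti L (leqnn L)) => //; try exact: inL.
  have [lt|lt|E] := ltngtP j k.
  + exact: neq.
  + by move=> E; apply: (neq k j lt jL); rewrite E.
  + by exfalso; apply: jk.
move=> k kL; apply: (Hwt k.+1 kL); exact: (Hx k kL).1.
Qed.
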